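(* Let $\mu\in\mathbb{R}$, $\alpha>0$ and $y\in\mathbb{R}$ with $|y|\ge2|\mu|$. Then there is a unique $x_y\in\mathbb{R}$ with $x_y=\mu\log|x_y+iy|-\log\alpha$. Moreover, if $x>x_y$ then $x>\mu\log|x+iy|-\log\alpha$, and if $x<x_y$ then $x<\mu\log|x+iy|-\log\alpha$. *)

(* Defs.v *)
From Stdlib Require Import Reals.
Open Scope R_scope.

Definition cmod_xy (x y : R) : R := sqrt (x ^ 2 + y ^ 2).

(* Main.v *)
Require Import Defs.
From Stdlib Require Import Reals.
Open Scope R_scope.
From Stdlib Require Import Lra Psatz.
From Coquelicot Require Import Coquelicot.

Lemma Fderiv (mu alpha y : R) (hy0 : y <> 0) (x : R) :
  derivable_pt_lim (fun x => x - mu * ln (cmod_xy x y) + ln alpha) x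
    (1 - mu * x / (x ^ 2 + y ^ 2)).
Proof.
  apply is_derive_Reals. unfold cmod_xy.
  assert (Hp : 0 < x ^ 2 + y ^ 2) by (assert (0 < y^2) by (apply pow2_gt_0; auto); nra).
  auto_derive.
  - split; [lra|]. split; [|exact I]. apply sqrt_lt_R0; lra.
  - assert (Hs : sqrt (x*(x*1) + y*(y*1)) * sqrt (x*(x*1) + y*(y*1)) = x^2+y^2).
    { rewrite sqrt_sqrt; nra. }
    assert (0 < sqrt (x*(x*1) + y*(y*1))) by (apply sqrt_lt_R0; nra).
    set (s := sqrt (x*(x*1) + y*(y*1))) in *.
    replace (x^2+y^2) with (s*s) by (rewrite Hs; ring).
    field. lra.
Qed.

Lemma Fgrow (mu alpha y : R) (hy0 : y <> 0) (hy : Rabs y >= 2 * Rabs mu) (a b : R) :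
  a < b ->
  let F := fun x => x - mu * ln (cmod_xy x y) + ln alpha in
  F b - F a >= (b - a) / 2.
Proof.
  intros hab F.
  destruct (MVT_cor2 F (fun x => 1 - mu * x / (x ^ 2 + y ^ 2)) a b hab)
    as [c [Hc _]].
  { intros c _. apply Fderiv; auto. }
  rewrite Hc.
  assert (Hp : 0 < c ^ 2 + y ^ 2) by (assert (0 < y^2) by (apply pow2_gt_0; auto); nra).
  assert (H : mu * c / (c ^ 2 + y ^ 2) <= 1/2).
  { apply (Rmult_le_reg_r (c^2+y^2)); auto. field_simplify; try lra.
    
    assert (h1 : mu * c <= Rabs mu * Rabs c).
    { rewrite <- Rabs_mult. apply Rle_abs. }
    assert (h2 : Rabs mu * Rabs c <= Rabs y / 2 * Rabs c).
    { apply Rmult_le_compat_r; [apply Rabs_pos | lra]. }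
    assert (h3 : Rabs y * Rabs c <= (c^2 + y^2) / 2).
    {
      pose proof (Rsqr_abs c). pose proof (Rsqr_abs y). unfold Rsqr in *.
      assert (0 <= (Rabs y - Rabs c)^2) by apply pow2_ge_0. nra. }
    pose proof (Rabs_pos c). pose proof (Rabs_pos y). nra. }
  nra.
Qed.

Theorem lemma5p1 (mu alpha y : R) (halpha : 0 < alpha)
  (hy : Rabs y >= 2 * Rabs mu) :
  (exists! xy : R, xy = mu * ln (cmod_xy xy y) - ln alpha) /\
  (forall xy : R, xy = mu * ln (cmod_xy xy y) - ln alpha ->
    (forall x : R, x > xy -> x > mu * ln (cmod_xy x y) - ln alpha) /\
    (forall x : R, x < xy -> x < mu * ln (cmod_xy x y) - ln alpha)).
Proof.
  destruct (Req_dec y 0) as [Hy0 | Hy0].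
  - assert (Hmu : mu = 0).
    { rewrite Hy0, Rabs_R0 in hy. pose proof (Rabs_pos mu).
      apply Rabs_eq_0. lra. }
    subst mu. split.
    + exists (- ln alpha). split; [ring|]. intros z Hz; rewrite Hz; ring.
    + intros xy Hxy; split; intros x Hx; rewrite Rmult_0_l in *; lra.
  - set (F := fun x => x - mu * ln (cmod_xy x y) + ln alpha).
    assert (HG : forall a b, a < b -> F b - F a >= (b - a) / 2)
      by (intros; apply Fgrow; auto).
    assert (Hequiv : forall x, x = mu * ln (cmod_xy x y) - ln alpha <-> F x = 0)
      by (intros; unfold F; split; intros; lra).
    assert (Hgt : forall xy x, F xy = 0 -> x > xy -> F x > 0).
    { intros xy x H1 H2. specialize (HG _ _ H2). lra. }
    assert (Hlt : forall xy x, F xy = 0 -> x < xy -> F x < 0).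
    { intros xy x H1 H2. specialize (HG _ _ H2). lra. }
    split.
    + assert (Hc : continuity F).
      { intro x. apply derivable_continuous_pt. exists (1 - mu * x / (x ^ 2 + y ^ 2)).
        apply Fderiv; auto. }
      set (m := Rabs (F 0)).
      assert (Hm : 0 <= m) by apply Rabs_pos.
      assert (H1 : F (- (2*m+1)) < 0).
      { assert (H := HG (-(2*m+1)) 0 ltac:(lra)). unfold m in *.
        pose proof (Rle_abs (F 0)). lra. }
      assert (H2 : 0 < F (2*m+1)).
      { assert (H := HG 0 (2*m+1) ltac:(lra)). unfold m in *.
        pose proof (Rle_abs (- F 0)). rewrite Rabs_Ropp in *. lra. }
      destruct (IVT F (-(2*m+1)) (2*m+1) Hc ltac:(lra) H1 H2) as [z [_ Hz]].
      exists z. split; [apply Hequiv; auto|].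
      intros w Hw. apply Hequiv in Hw.
      destruct (Rtotal_order z w) as [h|[h|h]]; auto.
      * specialize (Hgt _ _ Hz h). lra.
      * specialize (Hlt _ _ Hz h). lra.
    + intros xy Hxy. apply Hequiv in Hxy. split; intros x Hx.
      * specialize (Hgt _ _ Hxy Hx). unfold F in Hgt. lra.
      * specialize (Hlt _ _ Hxy Hx). unfold F in Hlt. lra.
Qed.
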